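(* Let $A$ be an $n\times n$ real matrix whose eigenvalues are all distinct, and let $p\geq 1$ be an integer. Then the following are equivalent: (i) there exists a real $n\times n$ diagonal matrix $B_d$ with at most $k$ nonzero entries such that the system $\frac{dx(t)}{dt}=Ax(t)+B_d u(t)$ is controllable; (ii) there exists a real $n\times p$ matrix $B_f$ with at most $k$ nonzero entries such that the system $\frac{dx(t)}{dt}=Ax(t)+B_f u(t)$ is controllable.
   Context: Controllability refers to the usual notion for continuous-time linear time-invariant systems $\frac{dx}{dt}=Ax+Bu$ (controllability of the pair $(A,B)$). A vector or matrix is called $k$-sparse if it has at most $k$ nonzero entries; the paper phrases (i) as ''the system $\Sigma_d$ is $k$-sparse controllable'' and (ii) as ''the system $\Sigma_f$ is $k$-sparse controllable''. *)

(* Defs.v *)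
From HB Require Import structures.
From mathcomp Require Import all_boot all_order all_algebra.
From mathcomp Require Import complex.
From mathcomp Require Import reals.
Set Implicit Arguments. Unset Strict Implicit. Unset Printing Implicit Defensive.
Import Order.TTheory GRing.Theory Num.Theory.
Local Open Scope ring_scope.

Definition ctrb_mx (R : pzRingType) (n m : nat) (A : 'M[R]_n) (B : 'M[R]_(n, m)) :
  'M[R]_(n, \sum_(i < n) m) :=
  \mxrow_(i < n) (A ^+ i *m B).

Definition controllable (R : fieldType) (n m : nat) (A : 'M[R]_n) (B : 'M[R]_(n, m)) : bool :=
  \rank (ctrb_mx A B) == n.

Definition ksparse (R : nzRingType) (m n k : nat) (B : 'M[R]_(m, n)) : bool :=
  (#|[set ij : 'I_m * 'I_n | B ij.1 ij.2 != 0%R]| <= k)%N.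

Definition cplx_mx (R : rcfType) (n : nat) (A : 'M[R]_n) : 'M[complex R]_n :=
  map_mx (fun x : R => (x%:C)%C) A.

Definition distinct_eigenvalues (R : rcfType) (n : nat) (A : 'M[R]_n) : Prop :=
  exists s : seq (complex R),
    [/\ size s = n, uniq s &
        char_poly (cplx_mx A) = \prod_(z <- s) ('X - z%:P)].

(* Main.v *)
Require Import Defs.
From HB Require Import structures.
From mathcomp Require Import all_boot all_order all_algebra.
From mathcomp Require Import complex reals.
Set Implicit Arguments. Unset Strict Implicit. Unset Printing Implicit Defensive.
Import Order.TTheory GRing.Theory Num.Theory.
Local Open Scope ring_scope.

Lemma ctrbP (F : fieldType) n m (A : 'M[F]_n) (B : 'M_(n,m)) :
  controllable A B <->
  (forall u : 'rV_n, (forall i : 'I_n, u *m (A ^+ i *m B) = 0) -> u = 0).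
Proof.
split.
- move=> cA u H; apply: (row_free_inj cA); rewrite mul0mx /ctrb_mx mul_mxrow.
  rewrite -(mxrow0 (q_ := fun _ : 'I_n => m)); exact: eq_mxrow.
- move=> H; apply: inj_row_free => v hv; apply: H => i.
  by move: (congr1 (fun M => submxrow (q_ := fun _ : 'I_n => m) M i) hv); rewrite /ctrb_mx mul_mxrow mxrowK submxrow0.
Qed.

Lemma map_mxX (R S : pzRingType) (f : {rmorphism R -> S}) n (A : 'M[R]_n) i :
  map_mx f (A ^+ i) = (map_mx f A) ^+ i.
Proof.
elim: i => [|i IH]; first by rewrite !expr0 map_mx1.
by rewrite !exprS -!mulmxE map_mxM IH.
Qed.

Lemma map_ctrb (R S : pzRingType) (f : {rmorphism R -> S}) n m (A : 'M[R]_n) (B : 'M_(n,m)) :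
  map_mx f (ctrb_mx A B) = ctrb_mx (map_mx f A) (map_mx f B).
Proof.
rewrite /ctrb_mx -[LHS]submxrowK; apply: eq_mxrow => j.
rewrite -map_mxX -map_mxM -(mxrowK (fun j => A ^+ j *m B) j).
by apply/matrixP => a b; rewrite !mxE.
Qed.

Lemma ctrl_map (R S : fieldType) (f : {rmorphism R -> S}) n m (A : 'M[R]_n) (B : 'M_(n,m)) :
  controllable (map_mx f A) (map_mx f B) = controllable A B.
Proof. by rewrite /controllable -map_ctrb mxrank_map. Qed.

Lemma vdm0 (F : fieldType) n (d : 'rV[F]_n) (v : 'rV[F]_n) :
  (forall i j, d 0 i = d 0 j -> i = j) ->
  (forall i : 'I_n, \sum_j d 0 j ^+ i * v 0 j = 0) -> v = 0.
Proof.
move=> dinj H.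
have Vu : Vandermonde n d \in unitmx.
  rewrite unitmxE det_Vandermonde unitfE; apply/prodf_neq0 => i _.
  apply/prodf_neq0 => j ij; rewrite subr_eq0; apply/eqP => /dinj ji.
  by move: ij; rewrite ji ltnn.
have H0 : Vandermonde n d *m v^T = 0.
  apply/matrixP => i k; rewrite !mxE -[RHS](H i); apply: eq_bigr => j _; by rewrite !mxE (ord1 k).
have E : v^T = 0 by rewrite -(mulKmx Vu v^T) H0 mulmx0.
by rewrite -[v]trmxK E trmx0.
Qed.

Section Core.
Variables (F : fieldType) (n : nat) (A P : 'M[F]_n) (d : 'rV[F]_n).
Hypothesis Pu : P \in unitmx.
Hypothesis PA : P *m A = diag_mx d *m P.

Lemma rowPA j i : row j P *m A ^+ i = (d 0 j ^+ i) *: row j P.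
Proof.
elim: i => [|i IH]; first by rewrite expr0 mulmx1 scale1r.
rewrite exprSr -mulmxE mulmxA IH -scalemxAl -row_mul PA row_mul row_diag_mx -scalemxAl -rowE.
by rewrite scalerA exprSr mulrC.
Qed.

Lemma rowP_neq0 j : row j P != 0.
Proof.
apply/eqP => h.
have : delta_mx 0 j = 0 :> 'rV[F]_n by rewrite -(mulmxK Pu (delta_mx 0 j)) -rowE h !mul0mx.
move=> /matrixP /(_ 0 j); rewrite !mxE !eqxx /= => /eqP; by rewrite oner_eq0.
Qed.

Lemma core_a m (B : 'M_(n, m)) : controllable A B -> forall j, row j (P *m B) != 0.
Proof.
move=> /ctrbP cA j; apply/negP => /eqP h.
have : row j P = 0.
  apply: cA => i; rewrite mulmxA rowPA -scalemxAl -row_mul h scaler0 //.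
by move/eqP; rewrite (negPf (rowP_neq0 j)).
Qed.

Lemma core_b (b : 'cV_n) : (forall i j, d 0 i = d 0 j -> i = j) ->
  (forall j, (P *m b) j 0 != 0) -> controllable A b.
Proof.
move=> dinj hb; apply/ctrbP => u hu.
pose z := u *m invmx P.
have uz : u = z *m P by rewrite /z mulmxKV.
clearbody z.
have : \row_j (z 0 j * (P *m b) j 0) = 0.
  apply: (vdm0 dinj) => i.
  have := hu i; rewrite uz -mulmxA mulmx_sum_row => /matrixP /(_ 0 0).
  rewrite mxE summxE => E; rewrite -[RHS]E; apply: eq_bigr => j _.
  rewrite row_mul mulmxA rowPA -scalemxAl -row_mul !mxE.
  by rewrite mulrCA.
move=> /matrixP hz; rewrite uz.
suff -> : z = 0 by rewrite mul0mx.
apply/matrixP => a j; rewrite (ord1 a) mxE.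
have := hz 0 j; rewrite mxE [RHS]mxE => /eqP; rewrite mulf_eq0 (negPf (hb j)) orbF.
by move/eqP.
Qed.
End Core.

Lemma exists_nonroot (R : rcfType) (p : {poly complex R}) :
  p != 0 -> exists t : R, p.[t%:C%C] != 0.
Proof.
move=> p0.
pose rs := [seq ((i%:R : R)%:C)%C | i <- iota 0 (size p)].
have [allr|] := boolP (all (root p) rs); last first.
  move=> /allPn [x xr nr]; move/mapP: xr => [i _ xi].
  by exists i%:R; rewrite -xi.
have U : uniq rs.
  rewrite map_inj_uniq ?iota_uniq // => i j /complexI /eqP.
  by rewrite eqr_nat => /eqP.
by have := max_poly_roots p0 allr U; rewrite size_map size_iota ltnn.
Qed.


Lemma n0_ctrl (R : fieldType) m (A : 'M[R]_0) (B : 'M_(0, m)) : controllable A B.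
Proof. by rewrite /controllable -leqn0 rank_leq_row. Qed.

Lemma n0_sparse (R : nzRingType) m k (B : 'M[R]_(0, m)) : ksparse k B.
Proof.
rewrite /ksparse; apply: leq_trans (max_card _) _.
by rewrite card_prod card_ord.
Qed.

Theorem corollary1 (R : realType) (n p k : nat) (A : 'M[R]_n) :
  distinct_eigenvalues A -> (1 <= p)%N ->
  ((exists Bd : 'M[R]_n, [/\ is_diag_mx Bd, ksparse k Bd & controllable A Bd]) <->
   (exists Bf : 'M[R]_(n, p), ksparse k Bf /\ controllable A Bf)).
Proof.
move=> [s [ss us cs]] p1.
case: n A s ss us cs => [|n'] A s ss us cs.
  split=> _; last by exists (diag_mx 0); split; [exact: diag_mx_is_diag|exact: n0_sparse|exact: n0_ctrl].
  by exists 0; split; [exact: n0_sparse|exact: n0_ctrl].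
pose f := real_complex R.
pose Ac := cplx_mx A.
have hdvd : mxminpoly Ac %| \prod_(z <- s) ('X - z%:P) by rewrite -cs mxminpoly_dvd_char.
have [P Pu] := (diagonalizableP Ac).2 (ex_intro2 _ _ s us hdvd).
move=> /similar_diagPex [d sim].
have PA := similarP Pu sim.
have dinj : forall i j, d 0 i = d 0 j -> i = j.
  have mp : mxminpoly Ac = mxminpoly (diag_mx d) := similar_mxminpoly Pu sim.
  have allr : all (root (mxminpoly Ac)) s.
    by apply/allP => z zs; rewrite root_mxminpoly cs root_prod_XsubC zs.
  have := max_poly_roots (monic_neq0 (mxminpoly_monic _)) allr us.
  rewrite mp mxminpoly_diag size_prod_XsubC ss ltnS => hle.
  have U : uniq [seq d 0 i | i <- enum 'I_n'.+1].
    by rewrite -[uniq _]negbK -ltn_size_undup size_map size_enum_ord -leqNgt.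
  have /injectiveP dI : injectiveb (fun i : 'I_n'.+1 => d 0 i) by [].
  exact: dI.
have Af : Ac = map_mx f A by [].
split.
- move=> [Bd [dBd sBd cBd]].
  pose Sb i := Bd i i != 0.
  have cBc : controllable Ac (map_mx f Bd) by rewrite Af ctrl_map.
  have hj : forall j, exists2 i, Sb i & P j i != 0.
    move=> j; have [/existsP [i /andP [Si Pi]]|/existsPn H] := boolP [exists i, Sb i && (P j i != 0)].
      by exists i.
    have := core_a Pu PA cBc j; suff -> : row j (P *m map_mx f Bd) = 0 by rewrite eqxx.
    apply/rowP => i; rewrite !mxE (bigD1 i) //= big1 => [|l li].
      rewrite addr0 !mxE; move: (H i); rewrite /Sb negb_and !negbK.
      by case/orP => /eqP ->; rewrite ?rmorph0 ?mul0r ?mulr0.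
    by rewrite !mxE (is_diag_mxP dBd) ?rmorph0 ?mulr0.
  pose q j := \sum_(i | Sb i) P j i *: ('X^i : {poly complex R}).
  have q0 : forall j, q j != 0.
    move=> j; have [i Si Pji] := hj j; apply/negP => /eqP qj0.
    have := congr1 (fun r : {poly complex R} => r`_i) qj0.
    rewrite coef0 /q coef_sum (bigD1 i) //= coefZ coefXn eqxx mulr1 big1 ?addr0.
      by move/eqP; rewrite (negPf Pji).
    move=> l /andP [_ li]; rewrite coefZ coefXn.
    by case: eqP => [/val_inj il|_]; [rewrite il eqxx in li | rewrite mulr0].
  have [t ht] := exists_nonroot (p := \prod_j q j) (introT (prodf_neq0 _ _) (fun j _ => q0 j)).
  rewrite horner_prod in ht.
  have htj : forall j, (q j).[t%:C%C] != 0 by move=> j; move/prodf_neq0: ht; apply.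
  pose b : 'cV[R]_n'.+1 := \col_i (if Sb i then t ^+ i else 0).
  have cb : controllable A b.
    rewrite -(ctrl_map f); apply: (core_b Pu PA) => // j.
    have := htj j; congr (_ != 0); rewrite /q horner_sum big_mkcond !mxE.
    apply: eq_bigr => i _; rewrite !mxE; case: ifP => _.
      by rewrite hornerZ hornerXn rmorphXn.
    by rewrite rmorph0 mulr0.
  pose j0 : 'I_p := Ordinal p1.
  exists (\matrix_(i, j) if j == j0 then b i 0 else 0); split.
  + rewrite /ksparse; apply: leq_trans sBd.
    apply: leq_trans (leq_imset_card (fun ij : 'I_n'.+1 * 'I_n'.+1 => (ij.1, j0)) _).
    apply: subset_leq_card; apply/subsetP => [[i j]]; rewrite inE /= mxE.
    case: ifP => [/eqP ->|_]; last by rewrite eqxx.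
    rewrite mxE; case: ifP => Si; last by rewrite eqxx.
    by move=> _; apply/imsetP; exists (i, i) => //; rewrite inE.
  + apply/ctrbP => u hu; apply: ((ctrbP _ _).1 cb u) => i.
    have := hu i; move/(congr1 (mulmx^~ (delta_mx j0 (0 : 'I_1)))).
    rewrite mul0mx -!mulmxA -colE.
    suff -> : col j0 (\matrix_(i, j) if j == j0 then b i 0 else 0) = b by [].
    by apply/matrixP => a c; rewrite (ord1 c) !mxE eqxx.
- move=> [Bf [sBf cBf]].
  pose Sb i := [exists j, Bf i j != 0].
  exists (diag_mx (\row_i (Sb i)%:R)); split.
  + exact: diag_mx_is_diag.
  + rewrite /ksparse; apply: leq_trans sBf.
    apply: leq_trans (leq_imset_card (fun ij : 'I_n'.+1 * 'I_p => (ij.1, ij.1)) _).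
    apply: subset_leq_card; apply/subsetP => [[i j]]; rewrite inE /= !mxE.
    case: (eqVneq i j) => [<-|ij]; last by rewrite mulr0n eqxx.
    rewrite mulr1n pnatr_eq0 eqb0 negbK => /existsP [j' nz].
    by apply/imsetP; exists (i, j'); rewrite ?inE.
  + apply/ctrbP => u hu; apply: ((ctrbP _ _).1 cBf) => i.
    have -> : Bf = diag_mx (\row_i (Sb i)%:R) *m Bf.
      apply/matrixP => a c; rewrite mul_diag_mx !mxE.
      case: (boolP (Sb a)) => [_|/existsPn H]; first by rewrite mul1r.
      by rewrite mul0r; move: (H c); rewrite negbK => /eqP.
    by rewrite !mulmxA -(mulmxA u) hu mul0mx.
Qed.
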